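(* Let $G=(V,E)$ be a finite connected graph with positive edge weights $(\theta_e)$, let $T(G)$ be its universal cover with covering map $\pi:T(G)\to G$ (edge weights inherited through $\pi$), and fix $z>0$. Let $\mathbf{y}(z)\in(0,\infty)^{\vec{E}}$ be the unique solution of $\mathbf{y}(z)=z\mathcal{R}_G(\mathbf{y}(z))$ and $\tilde{\mathbf{y}}(z)\in(0,\infty)^{\vec{E}(T(G))}$ the unique solution of $\tilde{\mathbf{y}}(z)=z\mathcal{R}_{T(G)}(\tilde{\mathbf{y}}(z))$. Then $\tilde{y}_{\vec{e}}(z)=y_{\pi(\vec{e})}(z)$ for every directed edge $\vec{e}$ of $T(G)$.
   Context: For a weighted graph $H$ with directed edge set $\vec{E}$ (two orientations $u\to v$, $v\to u$ per edge $uv$), the map $\mathcal{R}_H:(0,\infty)^{\vec{E}}\to(0,\infty)^{\vec{E}}$ is $\mathcal{R}_H(\mathbf{a})_{u\to v}=\big(1+\sum_{w\in\partial u\setminus v}\theta_{wu}a_{w\to u}\big)^{-1}$, where $\partial u\setminus v$ is the set of neighbours of $u$ other than $v$ and empty sums are $0$; $z\mathcal{R}_H$ multiplies each component by $z$. The universal cover $T(G)$ is the tree whose vertices are the finite non-backtracking walks in $G$ from a fixed vertex, two walks adjacent if one is a one-step extension of the other; $\pi$ maps a walk to its endpoint (and edges/directed edges accordingly). Existence and uniqueness of both fixed points are given. *)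

(* Defs.v *)
From mathcomp Require Import all_boot all_order all_algebra.
Set Implicit Arguments. Unset Strict Implicit. Unset Printing Implicit Defensive.
Import Order.TTheory GRing.Theory Num.Theory.
Local Open Scope ring_scope.

(* A finite weighted graph: vertex type V : finType, a symmetric irreflexive
   adjacency relation adj, and edge weights theta : V -> V -> R (only the values
   on edges matter).  Directed edges of G are the pairs (u,v) with adj u v.
   Vectors indexed by directed edges are modelled as functions V -> V -> R
   (values off the directed edges are irrelevant). *)

Section Defs.
Variable R : realFieldType.
Variable V : finType.
Variable adj : rel V.
Variable theta : V -> V -> R.

Definition RG (a : V -> V -> R) (u v : V) : R :=
  (1 + \sum_(w | adj u w && (w != v)) theta w u * a w u)^-1.

Variable o : V.

Fixpoint nonbacktracking (s : seq V) : bool :=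
  match s with
  | a :: ((b :: c :: _) as t) => (a != c) && nonbacktracking t
  | _ => true
  end.

(* vertices of T(G): finite non-backtracking walks in G starting at o *)
Definition is_walk (w : seq V) : bool :=
  match w with
  | x :: p => (x == o) && path adj x p && nonbacktracking w
  | [::] => false
  end.

Definition ext1 (w w' : seq V) : bool :=
  (size w' == (size w).+1) && (take (size w) w' == w).

Definition tadj (w w' : seq V) : bool := ext1 w w' || ext1 w' w.

Definition tdedge (w w' : seq V) : bool := [&& is_walk w, is_walk w' & tadj w w'].

Definition piV (w : seq V) : V := last o w.

Definition thetaT (w w' : seq V) : R := theta (piV w) (piV w').

(* a finite list containing every T(G)-neighbour of w: its parent and all
   one-step extensions (filtered below by the actual adjacency relation) *)
Definition tcand (w : seq V) : seq (seq V) :=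
  undup (take (size w).-1 w :: [seq rcons w x | x <- enum V]).

Definition RT (a : seq V -> seq V -> R) (w w' : seq V) : R :=
  (1 + \sum_(u <- tcand w | [&& is_walk u, tadj u w & u != w'])
          thetaT u w * a u w)^-1.
End Defs.

(* Main.v *)
Require Import Defs.
From mathcomp Require Import all_boot all_order all_algebra.
Set Implicit Arguments. Unset Strict Implicit. Unset Printing Implicit Defensive.

Lemma nbt_cons (V : finType) (h : V) s :
  nonbacktracking (h :: s) =
  nonbacktracking s && (if s is _ :: c :: _ then h != c else true).
Proof. by case: s => [|x [|y s]] //=; rewrite andbC. Qed.

Lemma nbt_rcons3 (V : finType) (s : seq V) a b c :
  nonbacktracking (rcons (rcons (rcons s a) b) c) =
  nonbacktracking (rcons (rcons s a) b) && (a != c).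
Proof.
elim: s => [|h t IH]; first by rewrite /= andbT.
rewrite rcons_cons [in RHS]rcons_cons rcons_cons !nbt_cons IH.
case: t {IH} => [|x [|y t]] /=.
  by rewrite andbC. by rewrite andbAC. by rewrite andbAC.
Qed.

Lemma nbt_rcons2 (V : finType) (s : seq V) a b :
  nonbacktracking (rcons (rcons s a) b) -> nonbacktracking (rcons s a).
Proof.
case/lastP: s => [|s c] //; by rewrite nbt_rcons3 => /andP[].
Qed.

Lemma nbt_rcons (V : finType) (s : seq V) a :
  nonbacktracking (rcons s a) -> nonbacktracking s.
Proof. by case/lastP: s => [|s c] // /nbt_rcons2. Qed.

Section Walks.
Variables (V : finType) (adj : rel V) (o : V).
Local Notation walk := (is_walk adj o).

Lemma walk_rcons w c : w != [::] ->
  walk (rcons w c) = [&& walk w, adj (last o w) c & nonbacktracking (rcons w c)].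
Proof.
case: w => [|x p] // _.
have E q : walk (x :: q) = (x == o) && path adj x q && nonbacktracking (x :: q) by [].
rewrite rcons_cons E -rcons_cons rcons_path E.
case N: (nonbacktracking (rcons _ _)); last by rewrite !andbF.
rewrite (nbt_rcons N) !andbT.
by case: (x == o); case: (path _ _ _).
Qed.

Lemma walk_single x : walk [:: x] = (x == o).
Proof. by rewrite /is_walk; case: (x == o). Qed.

Lemma walk_rcons1 c : walk [:: o; c] = adj o c.
Proof. by rewrite /is_walk eqxx /= !andbT. Qed.

Lemma walk_rcons3 s a b c :
  walk (rcons (rcons (rcons s a) b) c) =
  [&& walk (rcons (rcons s a) b), adj b c & a != c].
Proof.
rewrite walk_rcons ?last_rcons; last by case: s.
rewrite nbt_rcons3 walk_rcons; last by case: s.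
by case: (nonbacktracking (rcons (rcons s a) b)); rewrite /= ?andbF.
Qed.
End Walks.

Lemma rcons_nn (T : eqType) (s : seq T) a : rcons s a != [::].
Proof. by case: s. Qed.

Lemma parent_rcons (T : Type) (w : seq T) l : take (size (rcons w l)).-1 (rcons w l) = w.
Proof. by rewrite size_rcons -cats1 take_size_cat. Qed.

Section Nb.
Variables (V : finType) (adj : rel V) (o : V).
Hypothesis adj_sym : symmetric adj.
Local Notation walk := (is_walk adj o).
Local Notation N w u := (walk u && tadj u w).

Lemma ext1_rcons (w : seq V) x : ext1 w (rcons w x).
Proof. by rewrite /ext1 size_rcons -cats1 take_size_cat // !eqxx. Qed.

Lemma ext1_parent (w : seq V) : 0 < size w -> ext1 (take (size w).-1 w) w.
Proof.
move=> H; rewrite /ext1 size_take.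
have -> : (size w).-1 < size w by case: (size w) H.
by rewrite prednK // !eqxx.
Qed.

Lemma walk_nil0 : walk [::] = false.
Proof. by []. Qed.

Lemma nb_cases (w u : seq V) : walk u -> tadj u w ->
  (u = take (size w).-1 w /\ 1 < size w) \/ (exists x, u = rcons w x).
Proof.
move=> Wu /orP[]/andP[/eqP Hs /eqP Ht].
  left; rewrite Hs /= Ht; split=> //.
  by case: u Wu {Hs Ht}.
right; move: Ht; rewrite -{2}(cat_take_drop (size w) u) => ->.
have : size (drop (size w) u) = 1 by rewrite size_drop Hs subSnn.
case: (drop _ u) => [|x [|]] // _; exists x; by rewrite cats1.
Qed.

Lemma walk_shape (w : seq V) : walk w ->
  w = [:: o] \/ exists s a l, w = rcons (rcons s a) l.
Proof.
case/lastP: w => [|w1 l] //; case/lastP: w1 => [|s a].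
  by rewrite (_ : rcons [::] l = [:: l]) // walk_single => /eqP ->; left.
by move=> _; right; exists s, a, l.
Qed.

Lemma walk_prefix (w : seq V) x : w != [::] -> walk (rcons w x) -> walk w.
Proof. by move=> H; rewrite walk_rcons // => /andP[]. Qed.

Lemma N1 (w u : seq V) : walk w -> N w u -> adj (piV o w) (piV o u).
Proof.
move=> Ww /andP[Wu Tu]; case: (nb_cases Wu Tu) => [[-> H]|[x E]].
  case: (walk_shape Ww) => [E|[s [a [l E]]]]; first by rewrite E in H.
  subst w; rewrite size_rcons -cats1 take_size_cat // cats1.
  move: Ww; rewrite walk_rcons ?rcons_nn //.
  by rewrite /piV !last_rcons adj_sym => /and3P[].
subst u; move: Wu; rewrite walk_rcons; last by clear Tu; case: w Ww.
by rewrite /piV last_rcons => /and3P[].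
Qed.

Lemma pc (w : seq V) x : walk w -> 1 < size w -> walk (rcons w x) ->
  piV o (take (size w).-1 w) != x.
Proof.
move=> Ww H; case: (walk_shape Ww) => [E|[s [a [l E]]]]; first by rewrite E in H.
subst w; rewrite parent_rcons walk_rcons3.
by rewrite /piV last_rcons => /and3P[].
Qed.

Lemma N2 (w u1 u2 : seq V) : walk w -> N w u1 -> N w u2 ->
  piV o u1 = piV o u2 -> u1 = u2.
Proof.
move=> Ww /andP[W1 T1] /andP[W2 T2] Hp.
case: (nb_cases W1 T1) => [[E1 H1]|[x1 E1]];
case: (nb_cases W2 T2) => [[E2 H2]|[x2 E2]]; subst u1 u2 => //.
- by move: (pc Ww H1 W2); rewrite Hp /piV last_rcons eqxx.
- by move: (pc Ww H2 W1); rewrite -Hp /piV last_rcons eqxx.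
- by move: Hp; rewrite /piV !last_rcons => ->.
Qed.

Lemma N3 (w : seq V) x : walk w -> adj (piV o w) x ->
  exists u, [/\ N w u, piV o u = x & u \in tcand w].
Proof.
move=> Ww Ha.
have child : walk (rcons w x) -> exists u, [/\ N w u, piV o u = x & u \in tcand w].
  move=> Wc; exists (rcons w x); split.
  - by rewrite Wc /tadj ext1_rcons orbT.
  - by rewrite /piV last_rcons.
  - rewrite /tcand mem_undup in_cons; apply/orP; right.
    by apply/mapP; exists x; rewrite ?mem_enum.
case: (walk_shape Ww) => [E|[s [a [l E]]]].
  apply: child; subst w; have -> : rcons [:: o] x = [:: o; x] by [].
  by rewrite walk_rcons1.
subst w; have [Exa|Nxa] := eqVneq x a.
  exists (rcons s a); split.
  - rewrite (walk_prefix (rcons_nn _ _) Ww) /tadj.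
    by rewrite -[X in ext1 X _](parent_rcons (rcons s a) l) ext1_parent // size_rcons.
  - by rewrite /piV last_rcons.
  - rewrite /tcand mem_undup in_cons; apply/orP; left.
    by rewrite parent_rcons.
apply: child; rewrite walk_rcons3 Ww /=.
move: Ha; rewrite /piV last_rcons => ->; by rewrite eq_sym.
Qed.
End Nb.

Import GRing.Theory Num.Theory.
Local Open Scope ring_scope.

Lemma sum_eq (R : realFieldType) (V : finType) (adj : rel V) (o : V)
  (adj_sym : symmetric adj) (F : V -> R) (w w' : seq V) :
  is_walk adj o w -> is_walk adj o w' -> tadj w w' ->
  \sum_(u <- tcand w | [&& is_walk adj o u, tadj u w & u != w']) F (piV o u)
  = \sum_(x | adj (piV o w) x && (x != piV o w')) F x.
Proof.
move=> Ww Ww' T.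
have Nw' : is_walk adj o w' && tadj w' w by rewrite Ww' /tadj orbC.
set P := fun u => [&& is_walk adj o u, tadj u w & u != w'].
rewrite -big_filter -[RHS]big_filter.
rewrite (perm_big [seq piV o u | u <- [seq u <- tcand w | P u]]) ?big_map //.
apply: uniq_perm.
- by rewrite filter_uniq // index_enum_uniq.
- rewrite map_inj_in_uniq ?filter_uniq ?undup_uniq //.
  move=> u1 u2; rewrite !mem_filter => /andP[/and3P[W1 T1 _] _] /andP[/and3P[W2 T2 _] _].
  by move=> E; apply: (N2 Ww _ _ E); rewrite ?W1 ?T1 ?W2 ?T2.
move=> x; rewrite mem_filter mem_index_enum andbT; apply/idP/mapP.
  case/andP=> Ha Hn; case: (N3 Ww Ha) => u [Nu Pu Iu].
  exists u; rewrite ?Pu // mem_filter Iu andbT /P.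
  case/andP: Nu => -> -> /=; apply: contra Hn => /eqP E.
  by rewrite -Pu E.
case=> u; rewrite mem_filter => /andP[/and3P[Wu Tu Hu] _] ->.
rewrite (N1 adj_sym Ww) ?Wu ?Tu //=.
apply: contra Hu => /eqP E; apply/eqP.
by apply: (N2 Ww _ _ E); rewrite ?Wu ?Tu.
Qed.

Import Order.TTheory GRing.Theory Num.Theory.
Local Open Scope ring_scope.

Theorem proposition4p11 (R : realFieldType) (V : finType) (adj : rel V)
    (theta : V -> V -> R) (o : V) (z : R)
    (adj_sym : symmetric adj) (adj_irr : irreflexive adj)
    (theta_sym : forall u v, theta u v = theta v u)
    (theta_pos : forall u v, adj u v -> 0 < theta u v)
    (connected : forall u v, connect adj u v)
    (z_pos : 0 < z)
    (y : V -> V -> R)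
    (y_fix : forall u v, adj u v -> 0 < y u v /\ y u v = z * RG adj theta y u v)
    (y_uniq : forall y' : V -> V -> R,
        (forall u v, adj u v -> 0 < y' u v /\ y' u v = z * RG adj theta y' u v) ->
        forall u v, adj u v -> y' u v = y u v)
    (yt : seq V -> seq V -> R)
    (yt_fix : forall w w', tdedge adj o w w' ->
        0 < yt w w' /\ yt w w' = z * RT adj theta o yt w w')
    (yt_uniq : forall yt' : seq V -> seq V -> R,
        (forall w w', tdedge adj o w w' ->
           0 < yt' w w' /\ yt' w w' = z * RT adj theta o yt' w w') ->
        forall w w', tdedge adj o w w' -> yt' w w' = yt w w') :
  forall w w', tdedge adj o w w' -> yt w w' = y (piV o w) (piV o w').

Proof.
move=> w w' Hd; symmetry.
pose y' := fun a b : seq V => y (piV o a) (piV o b).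
have H : forall a b, tdedge adj o a b ->
    0 < y' a b /\ y' a b = z * RT adj theta o y' a b.
  move=> a b /and3P[Wa Wb Tab].
  have Nb : is_walk adj o b && tadj b a by rewrite Wb /tadj orbC.
  have Hadj := N1 adj_sym Wa Nb.
  have [Hp He] := y_fix _ _ Hadj.
  split => //; rewrite /y' He /RG /RT /thetaT.
  congr (z * (1 + _)^-1).
  symmetry; exact: (sum_eq adj_sym (fun x => theta x (piV o a) * y x (piV o a))).
exact: (yt_uniq y' H).
Qed.
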